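(* Let $R$ be a blind bisimulation on the nodes of a $\lambda$-graph $G$. Let $n,m$ be nodes with $n\,R\,m$ and $\tau$ a trace such that the path $n\xrightarrow{\tau}$ crosses an abstraction node $l$ and the path $m\xrightarrow{\tau}$ crosses an abstraction node $l'$. Then $l\,R\,l'$ holds if and only if $\mathrm{idx}(l,n\xrightarrow{\tau})=\mathrm{idx}(l',m\xrightarrow{\tau})$.
   Context: A pre-$\lambda$-graph is a directed graph whose nodes are of four kinds: an application node $@(n_1,n_2)$ has exactly two children, its left child $n_1$ and its right child $n_2$; an abstraction node $\lambda(n)$ has exactly one child, its body $n$; a free variable node has no children and carries an atom $\mathrm{id}(n)$ from a fixed set of atoms, distinct free variable nodes carrying distinct atoms; a bound variable node $\mathrm{var}(l)$ has exactly one outgoing binding edge, to an abstraction node $l$ (its binder). Letters $l,l'$ denote abstraction nodes. A trace is a finite sequence of directions from $\{\swarrow,\downarrow,\searrow\}$; $\epsilon$ is the empty trace and $d\cdot\tau$ is the trace $\tau$ extended by one final step $d$. Paths $n\xrightarrow{\tau}m$ are defined inductively: $n\xrightarrow{\epsilon}n$; if $n\xrightarrow{\tau}\lambda(m)$ then $n\xrightarrow{\downarrow\cdot\tau}m$; if $n\xrightarrow{\tau}@(m_1,m_2)$ then $n\xrightarrow{\swarrow\cdot\tau}m_1$ and $n\xrightarrow{\searrow\cdot\tau}m_2$ (binding edges are never followed). We write $n\xrightarrow{\tau}$ if $n\xrightarrow{\tau}m$ for some $m$. The path $n\xrightarrow{\tau}$ crosses a node $m$ if either $n\xrightarrow{\tau}m$,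 or $\tau=d\cdot\tau'$ and $n\xrightarrow{\tau'}$ crosses $m$. A root is a node $r$ such that the only path ending in $r$ has the empty trace. A node $m$ dominates $n$ if every path from a root to $n$ crosses $m$. A $\lambda$-graph is a pre-$\lambda$-graph that has finitely many nodes, is acyclic ($n\xrightarrow{\tau}n$ holds only for $\tau=\epsilon$), and is dominated (every bound variable node $\mathrm{var}(l)$ is dominated by its binder $l$). Two nodes are homogeneous if both are application nodes, or both abstraction nodes, or both free variable nodes, or both bound variable nodes; a binary relation $R$ on nodes is homogeneous if it only relates homogeneous nodes. Rules: $(\swarrow)$: $@(n_1,n_2)\,R\,@(m_1,m_2)$ implies $n_1\,R\,m_1$; $(\searrow)$: $@(n_1,n_2)\,R\,@(m_1,m_2)$ implies $n_2\,R\,m_2$; $(\downarrow)$: $\lambda(n)\,R\,\lambda(m)$ implies $n\,R\,m$. $R$ is propagated if closed under $(\swarrow),(\downarrow),(\searrow)$. A blind bisimulation is a homogeneous propagated relation. For a path $n\xrightarrow{\tau}$ crossing an abstraction node $l$, the index $\mathrm{idx}(l,n\xrightarrow{\tau})$ is defined by induction on the crossing: it is $0$ if $n\xrightarrow{\tau}l$; for $n\xrightarrow{d\cdot\tau}l'$ with $l'$ an abstraction node different from $l$ it is $\mathrm{idx}(l,n\xrightarrow{\tau})+1$; for $n\xrightarrow{d\cdot\tau}m$ with $m$ not an abstraction node it is $\mathrm{idx}(l,n\xrightarrow{\tau})$. *)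

(* Defs.v *)
From mathcomp Require Import all_boot.
Set Implicit Arguments. Unset Strict Implicit. Unset Printing Implicit Defensive.

Inductive node (A : Type) (V : Type) : Type :=
  | App of V & V
  | Abs of V
  | FVar of A
  | BVar of V.            (* var(l), binding edge to l *)
Arguments App {A V}. Arguments Abs {A V}. Arguments FVar {A V}. Arguments BVar {A V}.

(* Directions: Left = swarrow, Down = downarrow, Right = searrow. *)
Inductive dir := Left | Down | Right.

(* A trace d . tau is represented as the list  d :: tau  (head = last step). *)
Definition trace := seq dir.

Section Graph.
Variables (A : Type) (V : finType) (lab : V -> node A V).

Definition is_abs (v : V) : bool := if lab v is Abs _ then true else false.

Definition step (k : V) (d : dir) : option V :=
  match d, lab k with
  | Down, Abs b => Some b
  | Left, App a _ => Some a
  | Right, App _ b => Some b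
  | _, _ => None
  end.

Fixpoint walk (n : V) (t : trace) : option V :=
  match t with
  | [::] => Some n
  | d :: t' => if walk n t' is Some k then step k d else None
  end.

Definition path (n : V) (t : trace) (m : V) : Prop := walk n t = Some m.

Definition has_path (n : V) (t : trace) : Prop := exists m, path n t m.

Fixpoint crosses_aux (n : V) (t : trace) (m : V) : Prop :=
  path n t m \/ (if t is _ :: t' then crosses_aux n t' m else False).

Definition crosses (n : V) (t : trace) (m : V) : Prop :=
  has_path n t /\ crosses_aux n t m.

Definition is_root (r : V) : Prop := forall n t, path n t r -> t = [::].

Definition dominates (m n : V) : Prop :=
  forall r t, is_root r -> path r t n -> crosses r t m.

Definition pre_lambda_graph : Prop :=
  (forall v l, lab v = BVar l -> is_abs l) /\
  (forall v w (a b : A), lab v = FVar a -> lab w = FVar b -> v <> w -> a <> b).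

(* finiteness is given by V : finType *)
Definition lambda_graph : Prop :=
  [/\ pre_lambda_graph,
      (forall n t, path n t n -> t = [::]) &
      (forall v l, lab v = BVar l -> dominates l v)].

Definition homogeneous_nodes (n m : V) : Prop :=
  match lab n, lab m with
  | App _ _, App _ _ | Abs _, Abs _ | FVar _, FVar _ | BVar _, BVar _ => True
  | _, _ => False
  end.

Definition homogeneous (R : V -> V -> Prop) : Prop :=
  forall n m, R n m -> homogeneous_nodes n m.

Definition propagated (R : V -> V -> Prop) : Prop :=
  (forall n m n1 n2 m1 m2, R n m -> lab n = App n1 n2 -> lab m = App m1 m2 ->
     R n1 m1 /\ R n2 m2) /\
  (forall n m n' m', R n m -> lab n = Abs n' -> lab m = Abs m' -> R n' m').

Definition blind_bisimulation (R : V -> V -> Prop) : Prop :=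
  homogeneous R /\ propagated R.

(* idx(l, n --t-->), meaningful when the path crosses the abstraction l
   (default value 0 otherwise). *)
Fixpoint idx (l n : V) (t : trace) : nat :=
  match t with
  | [::] => 0
  | _ :: t' =>
      match walk n t with
      | Some k => if k == l then 0
                  else if is_abs k then (idx l n t').+1 else idx l n t'
      | None => 0
      end
  end.

End Graph.

(* Main.v *)
Require Import Defs.
From mathcomp Require Import all_boot.
Set Implicit Arguments. Unset Strict Implicit.

Lemma walk_cat A (V : finType) (lab : V -> node A V) n u s :
  walk lab n (u ++ s) = if walk lab n s is Some k then walk lab k u else None.
Proof.
elim: u => [|d u IH] /=; first by case: (walk lab n s).
rewrite IH; by case: (walk lab n s).
Qed.

Lemma step_R A (V : finType) (lab : V -> node A V) R x y d :
  blind_bisimulation lab R -> R x y ->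
  match step lab x d, step lab y d with
  | Some a, Some b => R a b | None, None => True | _, _ => False end.
Proof.
move=> [hom [pa pb]] Rxy; have := hom _ _ Rxy.
rewrite /homogeneous_nodes /step.
case: d; case E1: (lab x) => [a1 a2|a1|a1|a1]; case E2: (lab y) => [b1 b2|b1|b1|b1] //= _.
- exact: (pa _ _ _ _ _ _ Rxy E1 E2).1.
- exact: (pb _ _ _ _ Rxy E1 E2).
- exact: (pa _ _ _ _ _ _ Rxy E1 E2).2.
Qed.

Lemma walk_R A (V : finType) (lab : V -> node A V) R x y s :
  blind_bisimulation lab R -> R x y ->
  match walk lab x s, walk lab y s with
  | Some a, Some b => R a b | None, None => True | _, _ => False end.
Proof.
move=> bb Rxy; elim: s => [|d s IH] //=.
case: (walk lab x s) IH => [a|]; case: (walk lab y s) => [b|] //= Rab.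
exact: step_R.
Qed.

Lemma def_R A (V : finType) (lab : V -> node A V) R x y s :
  blind_bisimulation lab R -> R x y ->
  (walk lab x s <> None <-> walk lab y s <> None).
Proof.
move=> bb Rxy; have := walk_R s bb Rxy.
by case: (walk lab x s); case: (walk lab y s).
Qed.

Lemma abs_R A (V : finType) (lab : V -> node A V) R x y :
  blind_bisimulation lab R -> R x y -> is_abs lab x = is_abs lab y.
Proof.
move=> [hom _] Rxy; have := hom _ _ Rxy; rewrite /homogeneous_nodes /is_abs.
by case: (lab x); case: (lab y).
Qed.

Fixpoint cnt A (V : finType) (lab : V -> node A V) x (u : trace) : nat :=
  match u with
  | [::] => 0
  | d :: u' => (if walk lab x u is Some k then is_abs lab k : nat else 0) + cnt lab x u'
  end.

Lemma cnt_cons A (V : finType) (lab : V -> node A V) x d u :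
  cnt lab x (d :: u) = (if walk lab x (d :: u) is Some k then is_abs lab k : nat else 0) + cnt lab x u.
Proof. by []. Qed.

Lemma cnt_R A (V : finType) (lab : V -> node A V) R x y u :
  blind_bisimulation lab R -> R x y -> cnt lab x u = cnt lab y u.
Proof.
move=> bb Rxy; elim: u => [|d u IH] //; rewrite !cnt_cons IH.
have := walk_R (d :: u) bb Rxy.
case: (walk lab x (d :: u)) => [a|]; case: (walk lab y (d :: u)) => [b|] //= Rab.
by rewrite (abs_R bb Rab).
Qed.

Lemma cnt_cat A (V : finType) (lab : V -> node A V) x y u w :
  walk lab x w = Some y -> cnt lab x (u ++ w) = cnt lab y u + cnt lab x w.
Proof.
move=> Hw; elim: u => [|d u IH] //.
rewrite cat_cons !cnt_cons IH addnA; congr (_ + _ + _).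
have := walk_cat lab x (d :: u) w; rewrite Hw /= => ->; by [].
Qed.

Lemma idx_cnt A (V : finType) (lab : V -> node A V) n l u s :
  lambda_graph lab -> walk lab n s = Some l -> walk lab l u <> None ->
  idx lab l n (u ++ s) = cnt lab l u.
Proof.
move=> [_ acyc _] Hs; elim: u => [|d u IH] /=.
  by case: s Hs => [|d s] //= ->; rewrite eqxx.
have Hc := walk_cat lab n u s; rewrite Hs in Hc.
rewrite Hc.
case E: (walk lab l u) IH => [k|] // IH Hd.
rewrite IH //.
case E2: (step lab k d) Hd => [j|] // _.
case: eqP => [ej|_]; last by case: (is_abs lab j).
exfalso; subst j.
have := acyc l (d :: u); rewrite /Defs.path /= E E2 => /(_ erefl) //.
Qed.

Lemma crosses_split A (V : finType) (lab : V -> node A V) n t l :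
  crosses_aux lab n t l -> exists u s, t = u ++ s /\ walk lab n s = Some l.
Proof.
elim: t => [|d t IH] /=.
  by move=> [H|[]]; exists [::], [::].
move=> [H|/IH [u [s [-> Hs]]]].
  by exists [::], (d :: t).
by exists (d :: u), s.
Qed.

Lemma cat_split (u1 s1 u2 s2 : trace) :
  u1 ++ s1 = u2 ++ s2 -> size s1 <= size s2 ->
  exists w, s2 = w ++ s1 /\ u1 = u2 ++ w.
Proof.
elim: u2 u1 => [|d u2 IH] u1 /=.
  by move=> <- _; exists u1.
case: u1 => [|d' u1] /=.
  move=> E; have := congr1 size E => /= ->; rewrite size_cat => H.
  by exfalso; move: H; rewrite ltnNge leq_addl.
move=> [-> E] Hs; have [w [-> ->]] := IH _ E Hs; by exists w.
Qed.

Fixpoint pw (u : trace) k : trace := if k is k'.+1 then u ++ pw u k' else [::].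

Lemma pwD u a b : pw u (a + b) = pw u a ++ pw u b.
Proof. elim: a => [|a IH] //=; by rewrite IH catA. Qed.

Lemma no_shape A (V : finType) (lab : V -> node A V) l u :
  lambda_graph lab -> u <> [::] ->
  (forall s, walk lab l s <> None <-> walk lab l (s ++ u) <> None) -> False.
Proof.
move=> [_ acyc _] un H.
have D : forall k, walk lab l (pw u k) <> None.
  elim=> [|k IH] //.
  rewrite -addn1 pwD /= cats0; exact: (proj1 (H _) IH).
pose f (i : 'I_#|V|.+1) := odflt l (walk lab l (pw u i)).
have : ~~ injectiveb f.
  apply/negP => /injectiveP /leq_card; by rewrite card_ord ltnn.
move=> /injectivePn [i [j nij Eij]].
have key : forall (i j : 'I_#|V|.+1), i < j -> f i = f j -> False.
  move=> a b ab Eab.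
  have Hb : pw u b = pw u (b - a) ++ pw u a by rewrite -pwD subnK // ltnW.
  have Ha := D a; have Hb' := D b.
  rewrite /f in Eab.
  case Ea: (walk lab l (pw u a)) Eab Ha => [x|] //= Eab _.
  case Eb: (walk lab l (pw u b)) Eab Hb' => [y|] //= Eab _; subst y.
  rewrite Hb walk_cat Ea in Eb.
  have hk : 0 < b - a by rewrite subn_gt0.
  have := acyc x _ Eb; move: hk; case: (b - a) => [|k] //= _.
  by case: u un {H D Hb Eb Ea f Eij} => //.
case: (ltngtP i j) => [ij|ji|ij]; first exact: (key _ _ ij Eij).
  exact: (key _ _ ji (esym Eij)).
by move: nij; rewrite (val_inj ij) eqxx.
Qed.

Lemma core A (V : finType) (lab : V -> node A V) R n m l l' u2 w s1 :
  lambda_graph lab -> blind_bisimulation lab R -> R n m ->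
  walk lab n s1 = Some l -> walk lab m (w ++ s1) = Some l' -> w <> [::] ->
  is_abs lab l' -> walk lab n (u2 ++ w ++ s1) <> None ->
  ~ R l l' /\ idx lab l n (u2 ++ w ++ s1) <> idx lab l' m (u2 ++ w ++ s1).
Proof.
move=> lg bb Rnm Hl Hl' wn al' Hd.
have Hd' : walk lab m (u2 ++ w ++ s1) <> None by apply/(def_R _ bb Rnm).
have := walk_R (w ++ s1) bb Rnm; rewrite Hl'.
case Ea: (walk lab n (w ++ s1)) => [a|] // Ral'.
have Ea' : walk lab l w = Some a by rewrite walk_cat Hl in Ea.
split.
  move=> Rll'; apply: (no_shape (l := l) (u := w) lg wn) => s.
  rewrite walk_cat Ea'.
  split => H.
    by apply/(def_R _ bb Ral'); apply/(def_R _ bb Rll').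
  by apply/(def_R _ bb Rll'); apply/(def_R _ bb Ral').
rewrite {1}catA (idx_cnt lg Hl); last by move: Hd; rewrite catA walk_cat Hl.
rewrite (idx_cnt lg Hl'); last by move: Hd'; rewrite walk_cat Hl'.
rewrite (cnt_cat _ Ea') (cnt_R _ bb Ral').
case: w wn Ea' {Hl' Ea Hd Hd'} => [|d w] // _ /= Ea'.
rewrite Ea' (abs_R bb Ral') al' => /eqP; by rewrite -[X in _ == X]addn0 eqn_add2l.
Qed.

Lemma flip_bb A (V : finType) (lab : V -> node A V) R :
  blind_bisimulation lab R -> blind_bisimulation lab (fun x y => R y x).
Proof.
move=> [hom [pa pb]]; split; [|split].
- move=> x y Rxy; have := hom _ _ Rxy; rewrite /homogeneous_nodes.
  by case: (lab x); case: (lab y).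
- move=> x y ? ? ? ? Rxy E1 E2; have [] := pa _ _ _ _ _ _ Rxy E2 E1; by split.
- move=> x y ? ? Rxy E1 E2; exact: (pb _ _ _ _ Rxy E2 E1).
Qed.

Theorem mainTheorem18 (A : Type) (V : finType) (lab : V -> node A V)
    (R : V -> V -> Prop) (n m l l' : V) (t : trace) :
  lambda_graph lab ->
  blind_bisimulation lab R ->
  R n m ->
  is_abs lab l -> crosses lab n t l ->
  is_abs lab l' -> crosses lab m t l' ->
  (R l l' <-> idx lab l n t = idx lab l' m t).
Proof.
move=> lg bb Rnm al [[x Hx] cl] al' [_ cl'].
have Hn : walk lab n t <> None by rewrite Hx.
have Hm : walk lab m t <> None by apply/(def_R _ bb Rnm).
have [u1 [s1 [E1 H1]]] := crosses_split cl.
have [u2 [s2 [E2 H2]]] := crosses_split cl'.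
have E : u1 ++ s1 = u2 ++ s2 by rewrite -E1 -E2.
case: (leqP (size s1) (size s2)) => hs.
  have [w [es2 eu1]] := cat_split E hs.
  subst s2 u1.
  case: w E2 H2 E1 {E hs} => [|d w] E2 H2 E1.
    rewrite cats0 /= in E1 *; subst t.
    have := walk_R s1 bb Rnm; rewrite H1 H2 => Rll'.
    rewrite (idx_cnt lg H1); last by move: Hn; rewrite walk_cat H1.
    rewrite (idx_cnt lg H2); last by move: Hm; rewrite walk_cat H2.
    by rewrite (cnt_R _ bb Rll').
  rewrite E2 in Hn.
  have [h1 h2] := core lg bb Rnm H1 H2 (ltac:(by []) : d :: w <> [::]) al' Hn.
  by rewrite E2; split.
have hs' : size s2 <= size s1 by apply: ltnW.
have [w [es1 eu2]] := cat_split (esym E) hs'.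
subst s1 u2.
case: w H1 E2 E1 hs {E hs'} => [|d w] H1 E2 E1 hs.
  by rewrite ltnn in hs.
rewrite E1 in Hm.
have [h1 h2] := core lg (flip_bb bb) Rnm H2 H1 (ltac:(by []) : d :: w <> [::]) al Hm.
rewrite E1; split => H; [exfalso; exact: h1 | exfalso; exact: h2 (esym H)].
Qed.
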